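(* Let $Q\in R$ and let $a,b,c,d$ be non-negative integers with $a+b\le n$ and $1\le c\le d\le b$. Then there exist elements $h_k\in H_{k-1,k}$ ($a+c\le k\le a+d$) such that $$T_{w_{a,b}}L_{c,d}(Q)=\Big\{L_{a+c,a+d}(Q)+\sum_{k=a+c}^{a+d}L_kh_k\Big\}T_{w_{a,b}}.$$
   Context: Ariki–Koike algebra: $R$ a commutative integral domain with $1$, $n,r\ge1$, $q,Q_1,\dots,Q_r\in R$, $q$ invertible; generators $T_0,\dots,T_{n-1}$, relations $(T_0-Q_1)\cdots(T_0-Q_r)=0$, $T_0T_1T_0T_1=T_1T_0T_1T_0$, $(T_i+q)(T_i-1)=0$ ($1\le i\le n-1$), $T_{i+1}T_iT_{i+1}=T_iT_{i+1}T_i$, $T_iT_j=T_jT_i$ ($0\le i<j-1\le n-2$). $T_w=T_{i_1}\cdots T_{i_k}$ for a reduced expression $w=s_{i_1}\cdots s_{i_k}$, $s_i=(i,i+1)$. $L_m=q^{1-m}T_{m-1}\cdots T_1T_0T_1\cdots T_{m-1}$. Notation: for $i\le j$, $T_{i,j}=T_iT_{i+1}\cdots T_j$, and $T_{i,j}=1$ if $i>j$. $T_{w_{a,b}}=T_{a,a+b-1}T_{a-1,a+b-2}\cdots T_{1,b}$ (and $T_{w_{a,b}}=1$ if $a=0$ or $b=0$); this is $T_w$ for the permutation $w_{a,b}$ sending $i\mapsto b+i$ for $1\le i\le a$ and $a+i\mapsto i$ for $1\le i\le b$, the product of the $s_{i,j}=s_is_{i+1}\cdots s_j$ being reduced. For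 $Q\in R$, $L_{i,j}(Q)=(L_i-Q)(L_{i+1}-Q)\cdots(L_j-Q)$ if $i\le j$ and $1$ if $i>j$. For $0\le k\le m\le n$, $H_{k,m}$ is the $R$-span of $\{L_1^{c_1}\cdots L_k^{c_k}T_w:0\le c_i<r,\ w\in\mathfrak S_m\}$, where $\mathfrak S_m\subseteq\mathfrak S_n$ is generated by $s_1,\dots,s_{m-1}$. *)

(* Defs.v *)
From HB Require Import structures.
From mathcomp Require Import all_boot all_order all_algebra.
Set Implicit Arguments. Unset Strict Implicit. Unset Printing Implicit Defensive.
Import Order.TTheory GRing.Theory Num.Theory.
Local Open Scope ring_scope.

Section AK.
Variables (R : comUnitRingType) (A : algType R).
Implicit Types (T : nat -> A) (q : R).

Definition AK_relations (n r : nat) q (Qs : 'I_r -> R) T : Prop :=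
  [/\ \prod_(i < r) (T 0%N - (Qs i)%:A) = 0,
      (1 < n)%N -> T 0%N * T 1%N * T 0%N * T 1%N = T 1%N * T 0%N * T 1%N * T 0%N,
      (forall i, (1 <= i < n)%N -> (T i + q%:A) * (T i - 1) = 0),
      (forall i, (1 <= i)%N -> (i.+1 < n)%N ->
          T i.+1 * T i * T i.+1 = T i * T i.+1 * T i) &
      (forall i j, (i.+1 < j)%N -> (j < n)%N -> T i * T j = T j * T i)].

Definition Tij T (i j : nat) : A := \prod_(i <= k < j.+1) T k.

Definition Twab T (a b : nat) : A :=
  \prod_(0 <= t < a) Tij T (a - t) (a + b - 1 - t).

Definition Lm T q (m : nat) : A :=
  (q ^+ m.-1)^-1 *:
    ((\prod_(k <- rev (iota 1 m.-1)) T k) * T 0%N * \prod_(1 <= k < m) T k).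

Definition Lij T q (Q : R) (i j : nat) : A :=
  \prod_(i <= k < j.+1) (Lm T q k - Q%:A).

Definition swapn (i x : nat) : nat :=
  if x == i then i.+1 else if x == i.+1 then i else x.

Definition word_perm (s : seq nat) (x : nat) : nat := foldr swapn x s.

Definition inversions (w : nat -> nat) (m : nat) : nat :=
  \sum_(1 <= i < m.+1) \sum_(i.+1 <= j < m.+1) (w j < w i)%N.

Definition reduced_in (m : nat) (s : seq nat) : bool :=
  all (fun i => (0 < i < m)%N) s && (size s == inversions (word_perm s) m).

Definition Tword T (s : seq nat) : A := \prod_(i <- s) T i.

Definition Lmon T q (k r : nat) (c : {ffun 'I_k -> 'I_r}) : A :=
  \prod_(i < k) Lm T q i.+1 ^+ c i.

(* membership in H_{k,m}: the R-span of L_1^{c_1}...L_k^{c_k} T_w,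
   0 <= c_i < r, w in S_m, T_w given by a reduced expression of w *)
Definition inH T q (r k m : nat) (h : A) : Prop :=
  exists s : seq ({ffun 'I_k -> 'I_r} * seq nat * R),
    all (fun x => reduced_in m x.1.2) s /\
    h = \sum_(x <- s) x.2 *: (Lmon T q x.1.1 * Tword T x.1.2).

End AK.

(* Main.v *)
Require Import Defs.
From HB Require Import structures.
From mathcomp Require Import all_boot all_order all_algebra.
From mathcomp Require Import zify.
Import GRing.Theory.
Local Open Scope ring_scope.
Set Implicit Arguments. Unset Strict Implicit. Unset Printing Implicit Defensive.
Section Comb0.
Local Open Scope nat_scope.


Definition colC (w : nat -> nat) m := \sum_(1 <= x < m) (w m < w x).

Lemma inv_rec w m : inversions w m.+1 = inversions w m + colC w m.+1.
Proof.
rewrite /inversions /colC big_nat_recr //= [X in _ + X = _]big_geq // addn0.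
rewrite -big_split /=; apply: eq_big_nat => x /andP[_ hx].
by rewrite big_nat_recr.
Qed.

Lemma eq_inv w w' m : (forall x, 1 <= x <= m -> w x = w' x) ->
  inversions w m = inversions w' m.
Proof.
move=> H; apply: eq_big_nat => x /andP[h1 h2]; apply: eq_big_nat => y /andP[h3 h4].
have hx : 0 < x <= m by rewrite h1 -(ltnS x m).
have hy : 0 < y <= m by rewrite -(ltnS y m) h4 andbT (leq_trans h1 (ltnW h3)).
by rewrite (H x hx) (H y hy).
Qed.



Lemma split3 (g : nat -> nat) i M : 1 <= i -> i.+1 < M ->
  \sum_(1 <= x < M) g x = \sum_(1 <= x < i) g x + (g i + g i.+1) + \sum_(i.+2 <= x < M) g x.
Proof.
move=> h1 h2.
rewrite (@big_cat_nat _ _ _ i) //; last by apply: ltnW; apply: ltnW.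
rewrite (@big_cat_nat _ _ _ i.+2 i) //; last by apply: ltnW.
have -> : \sum_(i <= x < i.+2) g x = g i + g i.+1 by rewrite big_nat_recl // big_nat1.
exact: addnA.
Qed.

Lemma sum_swap (f : nat -> nat) i M : 1 <= i -> i.+1 < M ->
  \sum_(1 <= x < M) f (swapn i x) = \sum_(1 <= x < M) f x.
Proof.
move=> h1 h2.
rewrite (split3 (fun x => f (swapn i x)) h1 h2) (split3 f h1 h2).
rewrite /swapn eqxx (gtn_eqF (ltnSn i)) eqxx (addnC (f i.+1)).
congr (_ + _ + _).
  apply: eq_big_nat => x /andP[_ hx].
  by rewrite (ltn_eqF hx) (ltn_eqF (ltn_trans hx (ltnSn _))).
apply: eq_big_nat => x /andP[hx _].
rewrite gtn_eqF; last by apply: leq_trans hx; apply: leqnSn.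
by rewrite gtn_eqF.
Qed.

Lemma inv_swap w i m : 1 <= i -> i < m -> w i < w i.+1 ->
  inversions (fun x => w (swapn i x)) m = (inversions w m).+1.
Proof.
case: i => [//|p] _ hm hw.
have [k ->] : exists k, m = p.+2 + k by exists (m - p.+2); rewrite subnKC.
elim: k => [|k IH].
  rewrite addn0 !inv_rec.
  rewrite (@eq_inv (fun x => w (swapn p.+1 x)) w p); last first.
    move=> x hx; rewrite /swapn ifF ?ifF //; lia.
  rewrite /colC.
  have S2 : forall g : nat -> nat, \sum_(1 <= x < p.+2) g x = \sum_(1 <= x < p.+1) g x + g p.+1.
    by move=> g; rewrite big_nat_recr.
  rewrite (S2 (fun x => w (swapn p.+1 p.+2) < w (swapn p.+1 x))) (S2 (fun x => w p.+2 < w x)).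
  have E : forall y, \sum_(1 <= x < p.+1) (y < w (swapn p.+1 x)) =
                    \sum_(1 <= x < p.+1) (y < w x).
    move=> y; apply: eq_big_nat => x hx; rewrite /swapn ifF ?ifF //; lia.
  rewrite !E /swapn eqxx ifF ?eqxx ?hw; last lia.
  have -> : (w p.+2 < w p.+1) = false by lia.
  rewrite /=; lia.
rewrite addnS (inv_rec _ (p.+2+k)) (inv_rec w (p.+2+k)) IH addSn; congr (_.+1 + _).
rewrite /colC.
have -> : swapn p.+1 (p.+2 + k).+1 = (p.+2 + k).+1.
  rewrite /swapn ifF ?ifF //; lia.
apply: (@sum_swap (fun x => w (p.+2 + k).+1 < w x)) => //; lia.
Qed.
Lemma wp_cat s t x : word_perm (s ++ t) x = word_perm s (word_perm t x).
Proof. by rewrite /word_perm foldr_cat. Qed.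

Lemma wp_range m s : all (fun i => 0 < i < m) s ->
  (forall x, m < x -> word_perm s x = x) /\
  (forall x, 0 < x <= m -> 0 < word_perm s x <= m).
Proof.
elim: s => [|i s IH] /=; first by split.
case/andP=> /andP[hi0 him] /IH [H1 H2]; split.
  move=> x hx.
  rewrite H1 // /swapn ifF ?ifF //; lia.
move=> x /H2 /andP[h3 h4].
rewrite /swapn.
case: ifP => [/eqP e|_]; first lia.
case: ifP => [/eqP e|_]; lia.
Qed.

Definition drun (m j : nat) : seq nat := rev (iota j (m.+1 - j)).

Inductive nfw : nat -> seq nat -> Prop :=
| nf0 : nfw 0 [::]
| nfS m u j : nfw m u -> 1 <= j <= m.+1 -> nfw m.+1 (u ++ drun m j).

Lemma drun_letters m j : 1 <= j -> all (fun i => 0 < i < m.+1) (drun m j).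
Proof.
move=> hj; rewrite /drun all_rev; apply/allP => x; rewrite mem_iota.
case/andP=> h1 h2; apply/andP; split; lia.
Qed.

Lemma nfw_letters m u : nfw m u -> all (fun i => 0 < i < m) u.
Proof.
elim=> //= k v j _ IH /andP[hj _]; rewrite all_cat drun_letters // andbT.
apply: sub_all IH => x /andP[-> h] /=; exact: ltn_trans h _.
Qed.

Lemma wp_run t l : word_perm (rev (iota t l)) t = t + l.
Proof.
elim: l t => [|l IH] t; first by rewrite addn0.
by rewrite /= rev_cons -cats1 wp_cat /= /swapn eqxx IH addnS.
Qed.

Lemma wp_run_lt t l x : x < t -> word_perm (rev (iota t l)) x = x.
Proof.
elim: l t => [|l IH] t hx //=.
rewrite rev_cons -cats1 wp_cat /= /swapn (ltn_eqF hx) (ltn_eqF (ltn_trans hx (ltnSn _))).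
by apply: IH; apply: ltn_trans hx _.
Qed.

Lemma nfw_reduced m u : nfw m u -> reduced_in m u.
Proof.
elim=> [|k v j hv IH hj]; first by rewrite /reduced_in /= /inversions big_geq.
rewrite /reduced_in nfw_letters /=; last by constructor.
move: IH; rewrite /reduced_in => /andP[hlet /eqP hsz].
have [H1 H2] := wp_range hlet.
rewrite size_cat hsz /drun size_rev size_iota.
case/andP: hj => hj1 hj2.
have key : forall l t, 1 <= t -> t + l = k.+1 ->
   inversions (word_perm (v ++ rev (iota t l))) k.+1 = inversions (word_perm v) k + l.
  elim=> [|l IHl] t ht htl.
    rewrite addn0 cats0 inv_rec /colC.
    rewrite big1_seq ?addn0 // => x /andP[_]; rewrite mem_index_iota => /andP[hx1 hx2].
    rewrite H1 //.
    have h : 0 < word_perm v x <= k by apply: H2; lia.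
    have -> : (k.+1 < word_perm v x) = false by lia.
    by [].
  rewrite /= rev_cons -cats1 catA.
  rewrite (@eq_inv _ (fun x => word_perm (v ++ rev (iota t.+1 l)) (swapn t x))); last first.
    by move=> x _; rewrite wp_cat.
  rewrite inv_swap //; first by rewrite (IHl t.+1) ?addnS //; lia.
    lia.
  rewrite !wp_cat (@wp_run_lt t.+1 l t) // wp_run.
  have -> : t.+1 + l = k.+1 by lia.
  rewrite (H1 k.+1) //.
  have h : 0 < word_perm v t <= k by apply: H2; lia.
  lia.
rewrite (key (k.+1 - j) j hj1) ?eqxx //; lia.
Qed.

Lemma nfw_nil m : nfw m [::].
Proof.
elim: m => [|m IH]; first by constructor.
have -> : [::] = [::] ++ drun m m.+1 by rewrite /drun subnn.
by apply: nfS => //; rewrite leqnn.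
Qed.

Lemma nfw_mono m u : nfw m u -> nfw m.+1 u.
Proof.
move=> h; have -> : u = u ++ drun m m.+1 by rewrite /drun subnn cats0.
by apply: nfS => //; rewrite leqnn.
Qed.



End Comb0.

Section Span.
Variables (R : comUnitRingType) (A : algType R).

Inductive spanI (P : A -> Prop) : A -> Prop :=
 | sp0 : spanI P 0
 | spG x : P x -> spanI P x
 | spD x y : spanI P x -> spanI P y -> spanI P (x + y)
 | spZ (a : R) x : spanI P x -> spanI P (a *: x).

Lemma spanN (P : A -> Prop) x : spanI P x -> spanI P (- x).
Proof. by move=> h; rewrite -scaleN1r; apply: spZ. Qed.

Lemma spanB (P : A -> Prop) x y : spanI P x -> spanI P y -> spanI P (x - y).
Proof. by move=> hx hy; apply: spD => //; apply: spanN. Qed.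

Lemma span_sum (P : A -> Prop) (I : eqType) (s : seq I) (F : I -> A) :
  (forall i, i \in s -> spanI P (F i)) -> spanI P (\sum_(i <- s) F i).
Proof.
elim: s => [|i s IH] H; first by rewrite big_nil; apply: sp0.
rewrite big_cons; apply: spD; first by apply: H; rewrite inE eqxx.
by apply: IH => j hj; apply: H; rewrite inE hj orbT.
Qed.

Lemma span_mono (P Q : A -> Prop) x : (forall y, P y -> spanI Q y) -> spanI P x -> spanI Q x.
Proof.
move=> H; elim=> [|y /H //|y z _ hy _ hz|a y _ hy]; first exact: sp0.
  exact: spD.
exact: spZ.
Qed.

Lemma span_mulr (P Q : A -> Prop) x y :
  (forall z, P z -> spanI Q (z * y)) -> spanI P x -> spanI Q (x * y).
Proof.
move=> H; elim=> [|z /H //|z w _ hz _ hw|a z _ hz]; first by rewrite mul0r; apply: sp0.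
  by rewrite mulrDl; apply: spD.
by rewrite -scalerAl; apply: spZ.
Qed.

Lemma span_mull (P Q : A -> Prop) x y :
  (forall z, P z -> spanI Q (y * z)) -> spanI P x -> spanI Q (y * x).
Proof.
move=> H; elim=> [|z /H //|z w _ hz _ hw|a z _ hz]; first by rewrite mulr0; apply: sp0.
  by rewrite mulrDr; apply: spD.
by rewrite -scalerAr; apply: spZ.
Qed.

Lemma span_mul (P P' Q : A -> Prop) x y :
  (forall u v, P u -> P' v -> spanI Q (u * v)) -> spanI P x -> spanI P' y -> spanI Q (x * y).
Proof.
move=> H hx hy; apply: (span_mulr _ hx) => z hz.
by apply: (span_mull _ hy) => w hw; apply: H.
Qed.

End Span.

Section Hecke.
Variables (R : comUnitRingType) (A : algType R) (n : nat) (q : R) (T : nat -> A).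
Hypothesis qU : q \is a GRing.unit.
Hypothesis Hquad : forall i, (1 <= i < n)%N -> (T i + q%:A) * (T i - 1) = 0.
Hypothesis Hbraid : forall i, (1 <= i)%N -> (i.+1 < n)%N ->
  T i.+1 * T i * T i.+1 = T i * T i.+1 * T i.
Hypothesis Hcomm : forall i j, (i.+1 < j)%N -> (j < n)%N -> T i * T j = T j * T i.
Hypothesis H0101 : (1 < n)%N -> T 0 * T 1 * T 0 * T 1 = T 1 * T 0 * T 1 * T 0.

Lemma quad i : (1 <= i < n)%N -> T i * T i = (1 - q) *: T i + q%:A.
Proof.
move=> h; apply/eqP; rewrite -subr_eq0 -(Hquad h).
rewrite mulrDl !mulrBr !mulr1 mulr_algl scalerBl scale1r.
apply/eqP; rewrite opprD opprB !addrA; congr (_ + _); exact: addrAC.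
Qed.

Definition Tinv i := q^-1 *: T i + (1 - q^-1)%:A.

Lemma TTinv i : (1 <= i < n)%N -> T i * Tinv i = 1.
Proof.
move=> h; rewrite /Tinv mulrDr -scalerAr quad // mulr_algr scalerDr scalerA.
rewrite addrAC -scalerDl mulrBr mulr1 mulVr //.
have -> : q^-1 - 1 + (1 - q^-1) = 0 :> R by rewrite addrC addrA subrK subrr.
by rewrite scale0r add0r scalerA mulVr // scale1r.
Qed.

Lemma TinvT i : (1 <= i < n)%N -> Tinv i * T i = 1.
Proof.
move=> h; rewrite /Tinv mulrDl -scalerAl quad // mulr_algl scalerDr scalerA.
rewrite addrAC -scalerDl mulrBr mulr1 mulVr //.
have -> : q^-1 - 1 + (1 - q^-1) = 0 :> R by rewrite addrC addrA subrK subrr.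
by rewrite scale0r add0r scalerA mulVr // scale1r.
Qed.

Notation TW := (Tword T).

Lemma TW_nil : TW [::] = 1. Proof. by rewrite /Tword big_nil. Qed.
Lemma TW_cons x s : TW (x :: s) = T x * TW s. Proof. by rewrite /Tword big_cons. Qed.
Lemma TW_cat s t : TW (s ++ t) = TW s * TW t. Proof. by rewrite /Tword big_cat. Qed.
Lemma TW_rcons s x : TW (s ++ [:: x]) = TW s * T x.
Proof. by rewrite TW_cat TW_cons TW_nil mulr1. Qed.

Lemma TW_commT s i : (i < n)%N ->
  all (fun x => (x.+1 < i)%N || (i.+1 < x)%N) s -> all (fun x => x < n)%N s ->
  TW s * T i = T i * TW s.
Proof.
move=> hi; elim: s => [|x s IH] /=; first by rewrite TW_nil mul1r mulr1.
case/andP=> hx hs /andP[hxn hsn]; rewrite TW_cons -mulrA IH // !mulrA.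
case/orP: hx => hx; first by rewrite Hcomm.
by rewrite [T i * T x]Hcomm.
Qed.

Lemma iotaS_r j l : iota j l.+1 = iota j l ++ [:: (j + l)%N].
Proof. by rewrite -addn1 iotaD. Qed.

Lemma run_down l j i : (1 <= j)%N -> (j < i < j + l)%N -> (j + l <= n)%N ->
  TW (rev (iota j l)) * T i = T i.-1 * TW (rev (iota j l)).
Proof.
elim: l i => [|l IH] i hj hi hn; first by lia.
rewrite iotaS_r rev_cat /= TW_cons.
case: (ltnP i (j + l)) => h.
  rewrite -mulrA (IH i hj); [|lia|lia].
  rewrite !mulrA -(Hcomm (i:=i.-1) (j:=(j+l)%N)) //; lia.
have ei : i = (j + l)%N by lia.
case: l IH hi hn h ei => [|l] IH hi hn h ei; first by lia.
rewrite iotaS_r rev_cat /= TW_cons.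
rewrite -!mulrA TW_commT; last first.
- apply/allP => x; rewrite mem_rev mem_iota; lia.
- apply/allP => x; rewrite mem_rev mem_iota; lia.
- lia.
rewrite ei addnS /= !mulrA Hbraid //; lia.
Qed.

Lemma run_up l s x : (1 <= s)%N -> (s <= x)%N -> (x.+1 < s + l)%N -> (s + l <= n)%N ->
  TW (iota s l) * T x = T x.+1 * TW (iota s l).
Proof.
elim: l x => [|l IH] x hs hx hxl hn; first by lia.
rewrite iotaS_r TW_rcons.
case: (ltnP x.+1 (s + l)) => h.
  rewrite -mulrA -(Hcomm (i:=x) (j:=(s+l)%N)); [|lia|lia].
  by rewrite mulrA IH ?mulrA //; lia.
have ex : x = (s + l).-1 by lia.
case: l IH hxl hn h ex => [|l] IH hxl hn h ex; first by lia.
rewrite iotaS_r TW_rcons.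
have ex' : x = (s + l)%N by lia.
rewrite addnS -ex' -!mulrA [T x * (T x.+1 * T x)]mulrA -Hbraid; [|lia|lia].
rewrite !mulrA TW_commT; last first.
- apply/allP => y; rewrite mem_iota; lia.
- apply/allP => y; rewrite mem_iota; lia.
- lia.
by [].
Qed.

Definition Hs m := spanI (fun y => exists2 u, nfw m u & y = TW u).

Lemma Hs_run m x j : (1 <= j <= m.+1)%N -> Hs m x -> Hs m.+1 (x * TW (drun m j)).
Proof.
move=> hj; apply: span_mulr => _ [u hu ->]; apply: spG.
by exists (u ++ drun m j); [apply: nfS | rewrite TW_cat].
Qed.

Lemma drun_S m j : (j <= m)%N -> drun m j = drun m j.+1 ++ [:: j].
Proof.
move=> h; rewrite /drun subSS.
have -> : (m.+1 - j = (m - j).+1)%N by lia.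
by rewrite /= rev_cons cats1.
Qed.

Lemma nf_mulT m u : nfw m u -> (m <= n)%N -> forall i, (1 <= i < m)%N -> Hs m (TW u * T i).
Proof.
elim=> [|k v j hv IH hj] hn i hi; first by lia.
rewrite TW_cat.
case: (ltnP i.+1 j) => h1.
  rewrite -mulrA TW_commT; last first.
  - apply/allP => x; rewrite /drun mem_rev mem_iota; lia.
  - apply/allP => x; rewrite /drun mem_rev mem_iota; lia.
  - lia.
  rewrite mulrA; apply: Hs_run => //; apply: IH; lia.
case: (ltnP j i) => h2.
  rewrite -mulrA /drun run_down; last lia; last lia; last lia.
  rewrite mulrA; apply: Hs_run => //; apply: IH; lia.
case: (ltnP i j) => h3.
  have ei : j = i.+1 by lia.
  apply: spG; exists (v ++ drun k i); first by apply: nfS => //; lia.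
  by rewrite ei (drun_S (_ : i <= k)%N) ?catA ?TW_rcons ?TW_cat ?mulrA //; lia.
have ej : j = i by lia.
rewrite ej (drun_S (_ : i <= k)%N); last lia.
rewrite TW_rcons -!mulrA quad; last lia.
rewrite !mulrDr mulr_algr -!scalerAr.
apply: spD; apply: spZ; apply: spG.
  exists (v ++ drun k i); first by apply: nfS => //; lia.
  by rewrite (drun_S (_ : i <= k)%N) ?catA ?TW_rcons ?TW_cat ?mulrA //; lia.
by exists (v ++ drun k i.+1); [apply: nfS => //; lia | rewrite TW_cat].
Qed.


Lemma Hs_one m : Hs m 1.
Proof. by apply: spG; exists [::]; [apply: nfw_nil | rewrite TW_nil]. Qed.

Lemma Hs_mulT m x i : (m <= n)%N -> (1 <= i < m)%N -> Hs m x -> Hs m (x * T i).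
Proof. by move=> hm hi; apply: span_mulr => _ [u hu ->]; apply: nf_mulT. Qed.

Lemma Hs_mulTW m x s : (m <= n)%N -> all (fun i => 0 < i < m)%N s -> Hs m x -> Hs m (x * TW s).
Proof.
move=> hm; elim: s x => [|i s IH] x /=; first by rewrite TW_nil mulr1.
case/andP=> hi hs hx; rewrite TW_cons mulrA; apply: IH => //; exact: Hs_mulT.
Qed.

Lemma Hs_TW m s : (m <= n)%N -> all (fun i => 0 < i < m)%N s -> Hs m (TW s).
Proof. by move=> hm hs; rewrite -(mul1r (TW s)); apply: Hs_mulTW => //; apply: Hs_one. Qed.

Lemma Hs_mul m x y : (m <= n)%N -> Hs m x -> Hs m y -> Hs m (x * y).
Proof.
move=> hm hx; apply: span_mull => _ [u hu ->].
by apply: Hs_mulTW => //; apply: nfw_letters.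
Qed.

Lemma Hs_T m i : (1 <= i < m)%N -> (m <= n)%N -> Hs m (T i).
Proof.
by move=> hi hm; rewrite -(mul1r (T i)); apply: Hs_mulT => //; apply: Hs_one.
Qed.

Lemma Hs_Tinv m i : (1 <= i < m)%N -> (m <= n)%N -> Hs m (Tinv i).
Proof.
move=> hi hm; apply: spD; first by apply: spZ; apply: Hs_T.
by apply: spZ; apply: Hs_one.
Qed.

Lemma Hs_S m x : Hs m x -> Hs m.+1 x.
Proof.
apply: span_mono => _ [u hu ->]; apply: spG; exists u => //; exact: nfw_mono.
Qed.

Lemma Hs_le m m' x : (m <= m')%N -> Hs m x -> Hs m' x.
Proof.
move=> h; rewrite -(subnKC h); elim: (m' - m)%N => [|k IH]; first by rewrite addn0.
by move=> hx; rewrite addnS; apply: Hs_S; apply: IH.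
Qed.

Definition Kw j := rev (iota 1 j.-1) ++ 0%N :: iota 1 j.-1.
Definition K j := TW (Kw j).

Lemma Lm_K j : Lm T q j = (q ^+ j.-1)^-1 *: K j.
Proof.
by rewrite /Lm /K /Kw TW_cat TW_cons /Tword mulrA /index_iota subn1.
Qed.

Lemma K_S j : (1 <= j)%N -> K j.+1 = T j * K j * T j.
Proof.
case: j => [//|j] _; rewrite /K /Kw -[j.+2.-1]/(j.+1) -[j.+1.-1]/j.
rewrite iotaS_r rev_cat /= TW_cons -cat_cons catA TW_rcons add1n.
by rewrite !mulrA.
Qed.

Lemma K1 : K 1 = T 0.
Proof. by rewrite /K /Kw /= TW_cons TW_nil mulr1. Qed.

Lemma K_commT_hi j i : (1 <= j)%N -> (j < i)%N -> (i < n)%N -> K j * T i = T i * K j.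
Proof.
move=> h0 h1 h2; apply: TW_commT => //; apply/allP => x;
  rewrite /Kw mem_cat mem_rev inE mem_iota; lia.
Qed.

Lemma commR (a b x : A) : a * b = b * a -> a * (b * x) = b * (a * x).
Proof. by rewrite !mulrA => ->. Qed.

Lemma braidR i x : (1 <= i)%N -> (i.+1 < n)%N ->
  T i.+1 * (T i * (T i.+1 * x)) = T i * (T i.+1 * (T i * x)).
Proof. by move=> h1 h2; rewrite !mulrA Hbraid. Qed.

Lemma braidR0 i : (1 <= i)%N -> (i.+1 < n)%N ->
  T i * (T i.+1 * T i) = T i.+1 * (T i * T i.+1).
Proof. by move=> h1 h2; rewrite !mulrA Hbraid. Qed.

Lemma K_commT_lo j i : (1 <= i)%N -> (i.+1 < j)%N -> (j <= n)%N -> K j * T i = T i * K j.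
Proof.
move=> hi; elim: j => [|j IH] hj hn; first by lia.
case: (ltnP i.+1 j) => h.
  rewrite K_S; last lia.
  rewrite -!mulrA -(Hcomm (i:=i) (j:=j)); [|lia|lia].
  rewrite (commR _ (IH _ _)); [|lia|lia].
  rewrite (commR _ (esym (Hcomm (i:=i) (j:=j) _ _))) //; lia.
have ej : j = i.+1 by lia.
rewrite ej K_S // K_S // -!mulrA braidR0; [|lia|lia].
rewrite (commR _ (K_commT_hi hi (_ : i < i.+1)%N _)); last lia; last lia.
by rewrite braidR //; lia.
Qed.

Lemma K_L2 i : (1 <= i < n)%N -> K i.+1 * (T i + (q - 1)%:A) = q *: (T i * K i).
Proof.
move=> hi; rewrite K_S; last lia.
rewrite mulrDr -!mulrA quad // mulr_algr mulrDr -scalerAr mulr_algr.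
rewrite mulrDr -!scalerAr addrAC -scalerDl.
have -> : 1 - q + (q - 1) = 0 :> R by rewrite addrC subrKA subrr.
by rewrite scale0r add0r.
Qed.


Lemma K_KS i : (1 <= i)%N -> (i < n)%N -> K i * K i.+1 = K i.+1 * K i.
Proof.
elim: i => [//|p IH] _ hn.
case: p IH hn => [|p] IH hn.
  by rewrite (K_S (j:=1)) // K1 !mulrA H0101.
have IHR : forall X, K p.+1 * (T p.+1 * (K p.+1 * (T p.+1 * X))) =
                     T p.+1 * (K p.+1 * (T p.+1 * (K p.+1 * X))).
  move=> X; rewrite !mulrA; congr (_ * X).
  by have := IH isT (ltnW hn); rewrite (K_S (j:=p.+1)) // !mulrA.
rewrite (K_S (_ : 1 <= p.+2)%N) // (K_S (_ : 1 <= p.+1)%N) // -!mulrA.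
have cbk : forall X, T p.+2 * (K p.+1 * X) = K p.+1 * (T p.+2 * X).
  by move=> X; apply: commR; rewrite K_commT_hi //.
have bR : forall X, T p.+2 * (T p.+1 * (T p.+2 * X)) = T p.+1 * (T p.+2 * (T p.+1 * X)).
  by move=> X; apply: braidR; lia.
rewrite [in X in X = _]/= -[in X in X = _]bR -[in X in X = _]cbk.
rewrite [in X in X = _](cbk (T p.+1 * T p.+2)) -[in X in X = _]braidR0; [|lia|lia].
rewrite [in X in X = _]IHR.
rewrite -[in X in _ = X]bR -[in X in _ = X]cbk [in X in _ = X]bR.
by rewrite [in X in _ = X](cbk (T p.+1)).
Qed.

Lemma K_comm i j : (1 <= i)%N -> (i < j)%N -> (j <= n)%N -> K i * K j = K j * K i.
Proof.
move=> hi; elim: j => [|j IH] hj hn; first by lia.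
case: (ltnP i j) => h.
  rewrite (K_S (j:=j)); last lia.
  rewrite -!mulrA (commR _ (K_commT_hi hi _ _)); [|lia|lia].
  rewrite (commR _ (IH _ _)); [|lia|lia].
  rewrite (K_commT_hi hi); [|lia|lia].
  by rewrite !mulrA.
have -> : j = i by lia.
apply: K_KS => //; lia.
Qed.


Notation L := (Lm T q).

Lemma L_commT j i : (1 <= j)%N -> (1 <= i)%N -> (i < n)%N -> (j <= n)%N ->
  i != j -> i.+1 != j -> L j * T i = T i * L j.
Proof.
move=> hj hi hin hjn h1 h2; rewrite Lm_K -scalerAl -scalerAr; congr (_ *: _).
case: (ltnP j i) => h; first by apply: K_commT_hi.
apply: K_commT_lo => //; lia.
Qed.

Lemma L_commTW j s : (1 <= j <= n)%N ->
  all (fun x => (1 <= x < n)%N && (x != j) && (x.+1 != j)) s -> L j * TW s = TW s * L j.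
Proof.
move=> hj; elim: s => [|x s IH] /=; first by rewrite TW_nil mulr1 mul1r.
case/andP=> /andP[/andP[hx1 hx2] hx3] hs.
rewrite TW_cons mulrA L_commT //; try lia.
by rewrite -mulrA IH // mulrA.
Qed.

Lemma L_TL i : (1 <= i < n)%N -> T i * L i = L i.+1 * (T i + (q - 1)%:A).
Proof.
move=> hi; rewrite !Lm_K -scalerAl K_L2 // scalerA -scalerAr.
case: i hi => [//|i] hi /=; congr (_ *: _).
by rewrite exprS invrM ?unitrX // -mulrA mulVr // mulr1.
Qed.

Lemma L_comm i j : (1 <= i <= n)%N -> (1 <= j <= n)%N -> L i * L j = L j * L i.
Proof.
move=> hi hj; rewrite !Lm_K -!scalerAl -!scalerAr !scalerA mulrC; congr (_ *: _).
case: (ltngtP i j) => h; [apply: K_comm | | by rewrite h]; try lia.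
by symmetry; apply: K_comm; lia.
Qed.

Definition TinvW s := \prod_(i <- rev s) Tinv i.

Lemma TW_TinvW s : all (fun x => 1 <= x < n)%N s -> TW s * TinvW s = 1.
Proof.
elim: s => [|x s IH] /=; first by rewrite TW_nil /TinvW big_nil mulr1.
case/andP=> hx hs; rewrite TW_cons /TinvW rev_cons -cats1 big_cat big_seq1 /=.
by rewrite -mulrA [X in _ * X]mulrA IH // mul1r TTinv.
Qed.

Lemma TinvW_TW s : all (fun x => 1 <= x < n)%N s -> TinvW s * TW s = 1.
Proof.
elim: s => [|x s IH] /=; first by rewrite TW_nil /TinvW big_nil mulr1.
case/andP=> hx hs; rewrite TW_cons /TinvW rev_cons -cats1 big_cat big_seq1 /=.
by rewrite -mulrA [X in _ * X]mulrA TinvT // mul1r IH.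
Qed.

Lemma Hs_TinvW m s : (m <= n)%N -> all (fun x => 0 < x < m)%N s -> Hs m (TinvW s).
Proof.
move=> hm; elim: s => [|x s IH] /=; first by rewrite /TinvW big_nil => _; apply: Hs_one.
case/andP=> hx hs; rewrite /TinvW rev_cons -cats1 big_cat big_seq1 /=.
apply: Hs_mul => //; first exact: IH.
apply: Hs_Tinv => //; lia.
Qed.


Lemma Tij_TW s e : Tij T s e = TW (iota s (e.+1 - s)).
Proof. by []. Qed.

Lemma Twab0 b : Twab T 0 b = 1.
Proof. by rewrite /Twab big_geq. Qed.

Lemma Twab_S a b : Twab T a.+1 b = TW (iota a.+1 b) * Twab T a b.
Proof.
rewrite /Twab big_nat_recl // subn0 Tij_TW; congr (TW (iota _ _) * _).
  lia.
apply: eq_big_nat => t ht; congr (Tij T _ _); lia.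
Qed.

Lemma PT a b j x : (1 <= j <= b)%N -> (a.+1 + b <= n)%N -> (1 <= x < a + j)%N ->
  exists2 z, Hs (a + j).+1 z & TW (iota a.+1 b) * T x = z * TW (iota a.+1 b).
Proof.
move=> hj hn hx.
case: (ltnP x a) => h1.
  exists (T x); first by apply: Hs_T; lia.
  rewrite TW_commT //; first lia.
    by apply/allP => y; rewrite mem_iota; lia.
  by apply/allP => y; rewrite mem_iota; lia.
case: (ltnP a x) => h2.
  exists (T x.+1); first by apply: Hs_T; lia.
  by apply: run_up; lia.
have ex : x = a by lia.
case: b hj hn => [|b] hj hn; first by lia.
exists (T a.+1 * T a * Tinv a.+1).
  apply: Hs_mul; first lia.
    apply: Hs_mul; first lia.
      by apply: Hs_T; lia.
    by apply: Hs_T; lia.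
  by apply: Hs_Tinv; lia.
rewrite ex /= TW_cons -mulrA TW_commT; first last.
- by apply/allP => y; rewrite mem_iota; lia.
- by apply/allP => y; rewrite mem_iota; lia.
- lia.
by rewrite -!mulrA [Tinv _ * _]mulrA TinvT ?mul1r ?mulrA //; lia.
Qed.

Lemma PTW a b j u : (1 <= j <= b)%N -> (a.+1 + b <= n)%N ->
  all (fun x => 0 < x < a + j)%N u ->
  exists2 z, Hs (a + j).+1 z & TW (iota a.+1 b) * TW u = z * TW (iota a.+1 b).
Proof.
move=> hj hn; elim: u => [|x u IH] /=.
  by move=> _; exists 1; [apply: Hs_one | rewrite TW_nil mul1r mulr1].
case/andP=> hx /IH [z hz ez].
have [z' hz' ez'] := PT hj hn hx.
exists (z' * z); first by apply: Hs_mul => //; lia.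
by rewrite TW_cons mulrA ez' -mulrA ez mulrA.
Qed.

Lemma Pconj a b j g : (1 <= j <= b)%N -> (a.+1 + b <= n)%N -> Hs (a + j) g ->
  exists2 g', Hs (a + j).+1 g' & TW (iota a.+1 b) * g = g' * TW (iota a.+1 b).
Proof.
move=> hj hn; elim=> [|_ [u hu ->]|x y _ [x' hx' ex] _ [y' hy' ey]|c x _ [x' hx' ex]].
- by exists 0; [apply: sp0 | rewrite mulr0 mul0r].
- by apply: PTW => //; apply: nfw_letters.
- by exists (x' + y'); [apply: spD | rewrite mulrDr ex ey mulrDl].
- by exists (c *: x'); [apply: spZ | rewrite -scalerAr ex scalerAl].
Qed.

Lemma C1 a b j : (1 <= j <= b)%N -> (a + b <= n)%N ->
  exists2 g, Hs (a + j) g & Twab T a b * L j = L (a + j) * (1 + g) * Twab T a b.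
Proof.
elim: a => [|a IH] hj hn.
  by exists 0; [apply: sp0 | rewrite Twab0 add0n addr0 !mulr1 mul1r].
have hn' : (a + b <= n)%N by lia.
have [g hg eg] := IH hj hn'.
set P := TW (iota a.+1 b).
set U := TW (iota a.+1 j.-1).
set V := TW (iota (a + j).+1 (b - j)).
have eP : P = U * T (a + j) * V.
  rewrite /P /U /V -TW_rcons -TW_cat -catA.
  have hb : b = (j.-1 + (1 + (b - j)))%N by lia.
  rewrite {1}hb iotaD iotaD /=; congr (TW (_ ++ _ :: iota _ _)); lia.
have hU : all (fun x => 1 <= x < n)%N (iota a.+1 j.-1).
  by apply/allP => y; rewrite mem_iota; lia.
have e1 : P * L (a + j) = L (a + j).+1 * (P + (q - 1) *: (U * V)).
  rewrite eP -!mulrA -(L_commTW (j:=(a+j)%N) (s:=iota (a + j).+1 (b - j))); first last.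
  - by apply/allP => y; rewrite mem_iota; lia.
  - lia.
  rewrite [T _ * (L _ * _)]mulrA L_TL; last lia.
  rewrite !mulrA -(L_commTW (j:=(a+j).+1) (s:=iota a.+1 j.-1)); first last.
  - by apply/allP => y; rewrite mem_iota; lia.
  - lia.
  rewrite -/U -!mulrA; congr (_ * _).
  by rewrite -/V mulrDl mulr_algl mulrDr -scalerAr.
set g1 := U * Tinv (a + j) * TinvW (iota a.+1 j.-1).
have e2 : U * V = g1 * P.
  rewrite /g1 eP !mulrA -[_ * TinvW _ * U]mulrA TinvW_TW // mulr1.
  by rewrite -[U * Tinv _ * _]mulrA TinvT ?mulr1 //; lia.
have hg1 : Hs (a + j).+1 g1.
  apply: Hs_mul; first lia.
    apply: Hs_mul; first lia.
      by apply: Hs_TW; [lia | apply/allP => y; rewrite mem_iota; lia].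
    by apply: Hs_Tinv; lia.
  by apply: Hs_TinvW; [lia | apply/allP => y; rewrite mem_iota; lia].
have [g' hg' eg'] := Pconj hj hn hg.
exists ((q - 1) *: g1 + g' + ((q - 1) *: g1) * g').
  apply: spD; last apply: Hs_mul; try lia.
    by apply: spD => //; apply: spZ.
  1,2: by try apply: spZ.
rewrite Twab_S -/P -mulrA eg !mulrA e1 e2.
have E3 : P + (q - 1) *: (g1 * P) = (1 + (q - 1) *: g1) * P.
  by rewrite mulrDl mul1r scalerAl.
have E4 : P * (1 + g) = (1 + g') * P by rewrite mulrDr mulr1 eg' mulrDl mul1r.
rewrite E3 -[_ * (_ * P) * (1 + g)]mulrA -[(1 + _) * P * (1 + g)]mulrA E4.
rewrite addSn !mulrA; congr (_ * _ * _).
rewrite -mulrA; congr (_ * _).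
by rewrite mulrDr mulr1 mulrDl mul1r !addrA.
Qed.


Definition LM (e : nat -> nat) K := \prod_(0 <= i < K) L i.+1 ^+ e i.
Definition Mgen K x := exists e, (forall i, e i <= 1)%N /\ x = LM e K.
Definition Gset k := spanI (fun x => exists e u,
  [/\ (forall i, e i <= 1)%N, nfw k u & x = LM e k.-1 * TW u]).

Definition setf (e : nat -> nat) K t := fun i => if i == K then t else e i.

Lemma LM_set e K t : LM e K * L K.+1 ^+ t = LM (setf e K t) K.+1.
Proof.
rewrite /LM big_nat_recr //= /setf eqxx; congr (_ * _).
by apply: eq_big_nat => i hi; rewrite ifF //; lia.
Qed.

Lemma LM_pad e K M : (K <= M)%N -> LM e K = LM (fun i => if (i < K)%N then e i else 0%N) M.
Proof.
move=> h; rewrite /LM (@big_cat_nat _ _ _ K 0 M _ _ (leq0n K) h) /=.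
rewrite [X in _ = _ * X]big1_seq ?mulr1.
  by apply: eq_big_nat => i hi; rewrite ifT //; lia.
by move=> i /andP[_]; rewrite mem_index_iota => hi; rewrite ifF ?expr0 //; lia.
Qed.

Lemma LM_commL e K j : (K <= n)%N -> (1 <= j <= n)%N -> L j * LM e K = LM e K * L j.
Proof.
move=> hK hj; rewrite /LM big_seq; apply: commr_prod => i; rewrite mem_index_iota => hi.
apply: commrX; rewrite /GRing.comm L_comm //; lia.
Qed.

Lemma Gset_commL k N x : (1 <= k)%N -> (k < N)%N -> (N <= n)%N -> Gset k x -> x * L N = L N * x.
Proof.
move=> hk hkN hN; elim=> [|_ [e [u [he hu ->]]]|y z _ hy _ hz|c y _ hy].
- by rewrite mul0r mulr0.
- rewrite -mulrA -L_commTW; first last.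
  + apply: sub_all (nfw_letters hu) => y /andP[h1 h2]; apply/andP; split; [apply/andP; split|]; lia.
  + lia.
  by rewrite mulrA -LM_commL ?mulrA //; lia.
- by rewrite mulrDl mulrDr hy hz.
- by rewrite -scalerAl hy scalerAr.
Qed.

Lemma MHs_G k x y : (1 <= k <= n)%N -> spanI (Mgen k.-1) x -> Hs k y -> Gset k (x * y).
Proof.
move=> hk hx hy; apply: (span_mul _ hx hy) => _ _ [e [he ->]] [u hu ->].
by apply: spG; exists e, u.
Qed.

Lemma Gset_L k N x y : (1 <= k)%N -> (k < N)%N -> (N <= n)%N -> Gset k x -> Hs N y ->
  Gset N (L k * x * y).
Proof.
move=> hk hkN hN hx hy; apply: (span_mulr (P := fun z => exists e u,
  [/\ (forall i, e i <= 1)%N, nfw k u & z = L k * (LM e k.-1 * TW u)])).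
  move=> _ [e [u [he hu ->]]].
  have -> : L k * (LM e k.-1 * TW u) * y =
            LM (setf e k.-1 1) k * (TW u * y).
    rewrite !mulrA LM_commL; [|lia|lia].
    have E : LM (setf e k.-1 1) k.-1.+1 = LM e k.-1 * L k.-1.+1 by rewrite -LM_set expr1.
    by rewrite (prednK hk) in E; rewrite E.
  rewrite (LM_pad _ (_ : k <= N.-1)%N); last lia.
  apply: MHs_G; first lia.
    by apply: spG; eexists; split; last reflexivity; move=> i; rewrite /setf; case: ifP => //; case: ifP.
  apply: Hs_mul => //.
  apply: (Hs_le (m:=k)); first lia.
  by apply: spG; exists u.
elim: hx => [|z hz|z w _ hz _ hw|c z _ hz].
- by rewrite mulr0; apply: sp0.
- by apply: spG; case: hz => e [u [he hu ->]]; exists e, u.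
- by rewrite mulrDr; apply: spD.
- by rewrite -scalerAr; apply: spZ.
Qed.

Lemma Mspan_prod s l Q : (1 <= s)%N -> (s + l <= n.+1)%N ->
  spanI (Mgen (s + l).-1) (\prod_(s <= k < s + l) (L k - Q%:A)).
Proof.
move=> hs; elim: l => [|l IH] hl.
  rewrite addn0 big_geq //; apply: spG; exists (fun _ => 0%N); split => //.
  by rewrite /LM big1 // => i _; rewrite expr0.
rewrite addnS big_nat_recr /=; last lia.
have hx : spanI (Mgen (s + l).-1) (\prod_(s <= k < s + l) (L k - Q%:A)) by apply: IH; lia.
apply: (span_mulr _ hx) => _ [e [he ->]].
rewrite mulrBr mulr_algr.
have ek : (s + l)%N = (s + l).-1.+1 by lia.
rewrite {2 3}ek -(expr1 (L _)) LM_set.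
have -> : LM e (s + l).-1 = LM e (s + l).-1 * L (s + l).-1.+1 ^+ 0 by rewrite expr0 mulr1.
rewrite LM_set -ek /=.
apply: spanB.
  by apply: spG; eexists; split; last reflexivity; move=> i; rewrite /setf; case: ifP.
by apply: spZ; apply: spG; eexists; split; last reflexivity; move=> i; rewrite /setf; case: ifP.
Qed.


Lemma perm5 (V : zmodType) (x1 x2 x3 x4 x5 : V) :
  x1 + x2 - x3 + (x4 - x5) = x1 - x3 + (- x5 + (x2 + x4)).
Proof.
rewrite [x2 + x4]addrC [- x5 + _]addrC !addrA; congr (_ + _).
rewrite -!addrA; congr (_ + _).
rewrite addrCA; congr (_ + _); by rewrite addrC.
Qed.

Lemma MI a b c Q l : (1 <= c)%N -> (a + b <= n)%N -> (c + l <= b.+1)%N ->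
  exists h : nat -> A, (forall k, (a + c <= k < a + c + l)%N -> Gset k (h k)) /\
   Twab T a b * \prod_(c <= k < c + l) (L k - Q%:A) =
   (\prod_(a + c <= k < a + c + l) (L k - Q%:A) + \sum_(a + c <= k < a + c + l) L k * h k)
     * Twab T a b.
Proof.
move=> hc hab; elim: l => [|l IH] hl.
  exists (fun _ => 0); split => [k|]; first lia.
  by rewrite !addn0 !big_geq // addr0 mulr1 mul1r.
have [h [hh eh]] : exists h : nat -> A, (forall k, (a + c <= k < a + c + l)%N -> Gset k (h k)) /\
   Twab T a b * \prod_(c <= k < c + l) (L k - Q%:A) =
   (\prod_(a + c <= k < a + c + l) (L k - Q%:A) + \sum_(a + c <= k < a + c + l) L k * h k)
     * Twab T a b by apply: IH; lia.
have hjb : (1 <= c + l <= b)%N by lia.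
have [g hg eg] := C1 hjb hab.
set N := (a + c + l)%N.
have eN : (a + (c + l))%N = N by rewrite /N addnA.
rewrite eN in hg eg.
set P' := \prod_(a + c <= k < N) (L k - Q%:A).
set S := \sum_(a + c <= k < N) L k * h k.
set W := Twab T a b.
have cS : S * L N = L N * S.
  rewrite /S mulr_suml mulr_sumr; apply: eq_big_nat => k hk.
  rewrite -mulrA (Gset_commL (k:=k)); [|lia|lia|lia|by apply: hh; lia].
  by rewrite !mulrA L_comm //; lia.
have cP : P' * L N = L N * P'.
  rewrite /P'; symmetry; rewrite big_seq; apply: commr_prod => k.
  rewrite mem_index_iota => hk; rewrite /GRing.comm mulrBl mulrBr L_comm; [|lia|lia].
  by rewrite mulr_algl mulr_algr.
exists (fun k => if k == N then P' * g + \sum_(a + c <= k' < N) L k' * h k' * (1 + g)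
                 else (- Q) *: h k).
split.
  move=> k hk; case: eqP => [->|ne].
    apply: spD.
      apply: MHs_G => //; first lia.
      by apply: (Mspan_prod Q (s := (a + c)%N) (l := l)); lia.
    apply: span_sum => k'; rewrite mem_index_iota => hk'.
    apply: Gset_L; try lia; first by apply: hh; lia.
    by apply: spD => //; apply: Hs_one.
  by apply: spZ; apply: hh; lia.
rewrite !addnS -/N !big_nat_recr /=; [|lia|lia|lia].
rewrite eqxx -/P'.
rewrite [\sum_(a + c <= k < N) _](eq_big_nat _ _ (F2 := fun k => L k * ((- Q) *: h k))); last first.
  by move=> k hk; rewrite ifF //; apply/eqP; lia.
rewrite mulrA eh -/S -/W -/P' -mulrA mulrBr eg mulr_algr.
have -> : L N * (1 + g) * W - Q *: W = (L N * (1 + g) - Q%:A) * W by rewrite mulrBl mulr_algl.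
rewrite mulrA; congr (_ * W).
have -> : \sum_(a + c <= k < N) L k * ((- Q) *: h k) = - (Q *: S).
  by rewrite /S scaler_sumr -sumrN; apply: eq_big_nat => k _; rewrite -scalerAr scaleNr.
have -> : \sum_(a + c <= k' < N) L k' * h k' * (1 + g) = S * (1 + g) by rewrite /S mulr_suml.
rewrite mulrDl !mulrBr !mulr_algr.
rewrite [P' * (L N * _)]mulrA cP -mulrA [S * (L N * _)]mulrA cS -mulrA.
rewrite [L N * (P' * g + _)]mulrDr.
rewrite [P' * (1 + g)]mulrDr mulr1 [L N * (P' + _)]mulrDr.
exact: perm5.
Qed.


Lemma span_inH r k (P : A -> Prop) x : (forall y, P y -> inH T q r k.-1 k y) ->
  spanI P x -> inH T q r k.-1 k x.
Proof.
move=> H; elim=> [|y /H //|y z _ [s1 [h1 e1]] _ [s2 [h2 e2]]|c y _ [s1 [h1 e1]]].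
- by exists [::]; split => //; rewrite big_nil.
- exists (s1 ++ s2); split; first by rewrite all_cat h1 h2.
  by rewrite big_cat e1 e2.
- exists [seq (p.1, c * p.2) | p <- s1]; split.
    by rewrite all_map; apply: sub_all h1 => p.
  by rewrite e1 scaler_sumr big_map; apply: eq_bigr => p _; rewrite scalerA.
Qed.

Lemma G_inH r k x : (1 < r)%N -> Gset k x -> inH T q r k.-1 k x.
Proof.
move=> hr; apply: span_inH => _ [e [u [he hu ->]]].
exists [:: ([ffun i : 'I_k.-1 => Ordinal (leq_ltn_trans (he i) hr)], u, 1)]; split.
  by rewrite /= nfw_reduced.
rewrite big_seq1 scale1r /=; congr (_ * _).
by rewrite /Lmon /LM big_mkord; apply: eq_bigr => i _; rewrite ffunE.
Qed.

Lemma Hs_inH r k x : (1 <= r)%N -> Hs k x -> inH T q r k.-1 k x.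
Proof.
move=> hr; apply: span_inH => _ [u hu ->].
exists [:: ([ffun i : 'I_k.-1 => Ordinal hr], u, 1)]; split.
  by rewrite /= nfw_reduced.
rewrite big_seq1 scale1r /= /Lmon big1 ?mul1r // => i _.
by rewrite ffunE expr0.
Qed.

Lemma Hs_expr m x t : (m <= n)%N -> Hs m x -> Hs m (x ^+ t).
Proof.
move=> hm hx; elim: t => [|t IH]; first by rewrite expr0; apply: Hs_one.
by rewrite exprS; apply: Hs_mul.
Qed.

Lemma L_Hs (Q1 : R) j : T 0 = Q1%:A -> (1 <= j <= n)%N -> Hs j (L j).
Proof.
move=> H0 hj; rewrite Lm_K /K /Kw TW_cat TW_cons H0 mulr_algl -scalerAr.
apply: spZ; apply: spZ; apply: Hs_mul; first lia.
  by apply: Hs_TW; [lia | apply/allP => y; rewrite mem_rev mem_iota; lia].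
by apply: Hs_TW; [lia | apply/allP => y; rewrite mem_iota; lia].
Qed.

Lemma LM_Hs (Q1 : R) e K k : T 0 = Q1%:A -> (K < k)%N -> (k <= n)%N -> Hs k (LM e K).
Proof.
move=> H0; elim: K => [|K IH] hK hk.
  by rewrite /LM big_geq //; apply: Hs_one.
rewrite /LM big_nat_recr //=; apply: Hs_mul => //; first by apply: IH; lia.
apply: Hs_expr => //; apply: (Hs_le (m := K.+1)); first lia.
by apply: (L_Hs H0); lia.
Qed.

Lemma G_Hs (Q1 : R) k x : T 0 = Q1%:A -> (1 <= k <= n)%N -> Gset k x -> Hs k x.
Proof.
move=> H0 hk; apply: span_mono => _ [e [u [he hu ->]]].
apply: Hs_mul; first lia.
  by apply: (LM_Hs _ H0); lia.
by apply: spG; exists u.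
Qed.

End Hecke.

Theorem lemma5p10 (R : idomainType) (A : algType R) (n r : nat) (q : R)
    (Qs : 'I_r -> R) (T : nat -> A) :
  q \is a GRing.unit -> (1 <= n)%N -> (1 <= r)%N ->
  AK_relations n q Qs T ->
  forall (Q : R) (a b c d : nat),
    (a + b <= n)%N -> (1 <= c)%N -> (c <= d)%N -> (d <= b)%N ->
    exists h : nat -> A,
      (forall k, (a + c <= k <= a + d)%N -> inH T q r k.-1 k (h k)) /\
      Twab T a b * Lij T q Q c d =
        (Lij T q Q (a + c) (a + d)
           + \sum_(a + c <= k < (a + d).+1) Lm T q k * h k) * Twab T a b.
Proof.
move=> qU hn hr [H0 H01 Hq Hb Hc] Q a b c d hab hc hcd hdb.
have hl : (c + (d.+1 - c) <= b.+1)%N by lia.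
have [h [hh eh]] := MI qU Hq Hb Hc H01 Q hc hab hl.
exists h; split.
  move=> k hk.
  have hk' : Gset q T k (h k) by apply: hh; lia.
  case: (ltnP 1 r) => hr2; first exact: G_inH.
  have r1 : r = 1%N by lia.
  subst r.
  have H0' : T 0%N = (Qs ord0)%:A by apply/eqP; rewrite -subr_eq0 -H0 big_ord1.
  apply: Hs_inH => //; apply: (G_Hs qU Hq Hb Hc H01 H0') => //; lia.
have E1 : (c + (d.+1 - c) = d.+1)%N by lia.
have E2 : (a + c + (d.+1 - c) = (a + d).+1)%N by lia.
by rewrite E1 E2 in eh.
Qed.
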